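(* Let $0\le\mu<L<\infty$, $q=\mu/L$, $f\in\mathcal{F}_{\mu,L}(\mathbb{R}^d)$ with a minimizer $x_\star$ and $f_\star=f(x_\star)$, and let $k\ge 0$. For any $y_{k-1},z_k\in\mathbb{R}^d$ and any $A_k\ge 0$, define $x_k=y_{k-1}-\frac1L\nabla f(y_{k-1})$, $A_{k+1}=\frac{(1+q)A_k+2\left(1+\sqrt{(1+A_k)(1+qA_k)}\right)}{(1-q)^2}$, $\beta_k=\frac{A_k}{(1-q)A_{k+1}}$, $\delta_k=\frac12\frac{(1-q)^2A_{k+1}-(1+q)A_k}{1+q+qA_k}$, $y_k=(1-\beta_k)z_k+\beta_k x_k$, and $z_{k+1}=(1-q\delta_k)z_k+q\delta_k y_k-\frac{\delta_k}{L}\nabla f(y_k)$. Then $\phi_{k+1}\le\phi_k$, where for $j\in\{k,k+1\}$ \[ \phi_j=(1-q)A_j\left[f(y_{j-1})-f_\star-\tfrac{1}{2L}\|\nabla f(y_{j-1})\|^2-\tfrac{\mu}{2(1-\mu/L)}\|y_{j-1}-\tfrac1L\nabla f(y_{j-1})-x_\star\|^2\right]+(L+\mu A_j)\|z_j-x_\star\|^2 . \]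
   Context: $\mathcal{F}_{\mu,L}(\mathbb{R}^d)$ denotes the set of proper closed convex functions $f:\mathbb{R}^d\to\mathbb{R}$ such that for all $x,y$: $f(x)\le f(y)+\langle\nabla f(y);x-y\rangle+\frac L2\|x-y\|^2$ and $f(x)\ge f(y)+\langle\nabla f(y);x-y\rangle+\frac\mu2\|x-y\|^2$. *)

(* Defs.v *)
From HB Require Import structures.
From mathcomp Require Import all_boot all_order all_algebra.
From mathcomp Require Import all_classical all_reals all_analysis.
Set Implicit Arguments. Unset Strict Implicit. Unset Printing Implicit Defensive.
Import Order.TTheory GRing.Theory Num.Theory.
Import numFieldNormedType.Exports.
Local Open Scope ring_scope.

Definition dot (R : realType) (d : nat) (u v : 'rV[R]_d) : R :=
  \sum_(i < d) u 0 i * v 0 i.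

Definition sqnorm (R : realType) (d : nat) (u : 'rV[R]_d) : R := dot u u.

Definition is_gradient (R : realType) (d : nat) (f : 'rV[R]_d -> R)
    (g : 'rV[R]_d -> 'rV[R]_d) : Prop :=
  (forall x, differentiable f x) /\ (forall x h, 'd f x h = dot (g x) h).

(* f \in F_{mu,L}(R^d), with gradient g. Convexity and closedness of f are
   implied (mu >= 0 lower bound, differentiability); properness is automatic
   for a real-valued f. *)
Definition in_FmuL (R : realType) (d : nat) (mu L : R) (f : 'rV[R]_d -> R)
    (g : 'rV[R]_d -> 'rV[R]_d) : Prop :=
  is_gradient f g /\
  (forall x y : 'rV[R]_d,
      f x <= f y + dot (g y) (x - y) + L / 2 * sqnorm (x - y) /\
      f y + dot (g y) (x - y) + mu / 2 * sqnorm (x - y) <= f x).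

(* Main.v *)
Require Import Defs.
From HB Require Import structures.
From mathcomp Require Import all_boot all_order all_algebra.
From mathcomp Require Import all_classical all_reals all_analysis.
From mathcomp Require Import ring lra.
Import Order.TTheory GRing.Theory Num.Theory.
Import numFieldNormedType.Exports.
Local Open Scope ring_scope.

Ltac sumify := rewrite /sqnorm /dot; do 5 rewrite ?mulr_sumr -?sumrN -?sumrB -?big_split /=.

Lemma interp (R : realType) (d : nat) (mu L : R) f g :
  0 <= mu -> mu < L -> in_FmuL mu L f g -> forall x y : 'rV[R]_d,
  f y + dot (g y) (x - y) + 1/(2*L) * sqnorm (g x - g y)
   + mu/(2*(1-mu/L)) * sqnorm (x - y - L^-1 *: (g x - g y)) <= f x.
Proof.
move=> hmu hL [_ hF] x y.
set w := x - (L-mu)^-1 *: (g x - g y - mu *: (x - y)).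
have [_ H1] := hF w y.
have [H2 _] := hF w x.
have L0 : L != 0 by rewrite gt_eqF //; exact: le_lt_trans hL.
have Lm0 : L - mu != 0 by rewrite subr_eq0 gt_eqF.
have Lm1 : 1 - mu/L != 0.
  by rewrite -(divff L0) -mulrBl mulf_neq0 // invr_eq0.
suff E : dot (g y) (x - y) + 1/(2*L) * sqnorm (g x - g y)
   + mu/(2*(1-mu/L)) * sqnorm (x - y - L^-1 *: (g x - g y)) =
  dot (g y) (w - y) + mu / 2 * sqnorm (w - y) - (dot (g x) (w - x) + L / 2 * sqnorm (w - x)).
  lra.
sumify.
apply: eq_bigr => i _; rewrite /w !mxE; field; by rewrite ?Lm0 ?L0 ?Lm1.


Qed.
Arguments interp {R d mu L f g}.

Lemma main (R : realType) (d : nat) (mu L : R)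
  (f : 'rV[R]_d -> R) (g : 'rV[R]_d -> 'rV[R]_d) (xs : 'rV[R]_d)
  (yprev zk : 'rV[R]_d) (Ak : R) q fs xk Ak1 betak deltak yk zk1 :
  0 <= mu -> mu < L ->
  in_FmuL mu L f g ->
  (forall x, f xs <= f x) ->
  0 <= Ak ->
  q = mu / L -> fs = f xs ->
  xk = yprev - L^-1 *: g yprev ->
  Ak1 = ((1 + q) * Ak + 2 * (1 + Num.sqrt ((1 + Ak) * (1 + q * Ak))))
               / (1 - q) ^+ 2 ->
  betak = Ak / ((1 - q) * Ak1) ->
  deltak = (1 / 2) * (((1 - q) ^+ 2 * Ak1 - (1 + q) * Ak)
                            / (1 + q + q * Ak)) ->
  yk = (1 - betak) *: zk + betak *: xk ->
  zk1 = (1 - q * deltak) *: zk + (q * deltak) *: yk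
             - (deltak / L) *: g yk ->
    (1 - q) * Ak1 * (f yk - fs - 1 / (2 * L) * sqnorm (g yk)
                   - mu / (2 * (1 - mu / L)) * sqnorm (yk - L^-1 *: g yk - xs))
    + (L + mu * Ak1) * sqnorm (zk1 - xs) <=
    (1 - q) * Ak * (f yprev - fs - 1 / (2 * L) * sqnorm (g yprev)
                   - mu / (2 * (1 - mu / L)) * sqnorm (yprev - L^-1 *: g yprev - xs))
    + (L + mu * Ak) * sqnorm (zk - xs).
Proof.
move=> hmu hL hF hmin hA hq hfs hxk hAk1_ hbeta hdelta hyk hzk1.
have Lp : 0 < L by exact: le_lt_trans hL.
have L0 : L != 0 by rewrite gt_eqF.
have q0 : 0 <= q by rewrite hq divr_ge0 // ltW.
have q1 : q < 1 by rewrite hq ltr_pdivrMr // mul1r.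
have q10 : 1 - q != 0 by rewrite subr_eq0 eq_sym lt_eqF.
have q1p : 0 < 1 - q by rewrite subr_gt0.
pose r := (1 + Ak) * (1 + q * Ak).
pose s := Num.sqrt r.
have r0 : 0 <= r by rewrite /r mulr_ge0 // addr_ge0 // mulr_ge0.
have s0 : 0 <= s by rewrite /s sqrtr_ge0.
have s2 : s ^+ 2 = r by rewrite /s sqr_sqrtr.
pose D := 1 + q + q * Ak.
have Dp : 0 < D by have := mulr_ge0 q0 hA; rewrite /D; lra.
have D0 : D != 0 by rewrite gt_eqF.
have hAk1 : Ak1 = ((1 + q) * Ak + 2 * (1 + s)) / (1 - q) ^+ 2 by rewrite hAk1_.
have q20 : (1 - q) ^+ 2 != 0 by rewrite expf_neq0.
have q2p : 0 < (1 - q) ^+ 2 by rewrite exprn_gt0.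
have eK : (1 - q) ^+ 2 * Ak1 = (1 + q) * Ak + 2 * (1 + s)
  by rewrite hAk1; field.
have hd : deltak = (1 + s) / D.
  by rewrite hdelta eK /D; field; rewrite -/D D0.
have sd : s = deltak * D - 1 by rewrite hd; field.
have Z : Ak + 2 * deltak - deltak ^+ 2 * D = 0.
  have e : D * (Ak + 2 * deltak - deltak ^+ 2 * D) = r - (deltak * D - 1) ^+ 2
    by rewrite /r /D; ring.
  rewrite -sd s2 subrr in e.
  by move/eqP: e; rewrite mulf_eq0 (negbTE D0) /= => /eqP.
have K1 : Ak * (1 - q * deltak ^+ 2) = (1 + q) * deltak ^+ 2 - 2 * deltak.
  by move: Z; rewrite /D; lra.
have eK2 : (1 - q) ^+ 2 * Ak1 = (1 + q) * Ak + 2 * (deltak * D).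
  by rewrite eK sd; ring.
have KB : Ak1 * (1 - q * deltak ^+ 2) = deltak ^+ 2.
  apply: (mulfI q20).
  have e1 := congr1 (fun t => t * (1 - q * deltak ^+ 2)) eK2.
  have e2 := congr1 (fun t => t * ((1 + q) + 2 * q * deltak)) K1.
  move: e1 e2 => /= e1 e2.
  rewrite /D in e1.
  lra.
have dp : 0 < deltak by rewrite hd divr_gt0 // ltr_pwDl.
have B0 : 0 < Ak1 by rewrite hAk1 divr_gt0 //; have := mulr_ge0 q0 hA; lra.
have Qp : 0 < 1 - q * deltak ^+ 2.
  by move: (exprn_gt0 2 dp); rewrite -{1}KB pmulr_rgt0.
have Q0 : 1 - q * deltak ^+ 2 != 0 by rewrite gt_eqF.
have hAk : Ak = ((1 + q) * deltak ^+ 2 - 2 * deltak) / (1 - q * deltak ^+ 2).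
  by apply: (mulIf Q0); rewrite K1; field.
have hB : Ak1 = deltak ^+ 2 / (1 - q * deltak ^+ 2).
  by apply: (mulIf Q0); rewrite KB; field.
have BA : 0 <= Ak1 - Ak.
  have h1 : 0 <= q * (3 - q) * Ak by rewrite !mulr_ge0 //; lra.
  have h2 : 0 <= (1 - q) ^+ 2 * (Ak1 - Ak) by rewrite mulrBr eK; move: h1; lra.
  by move: h2; rewrite pmulr_rge0.
have Lm1 : 1 - mu / L != 0 by rewrite -hq.
have gxs : g xs = 0.
  have [H _] := (hF.2 (xs - L^-1 *: g xs) xs).
  have := hmin (xs - L^-1 *: g xs).
  have E : dot (g xs) (xs - L^-1 *: g xs - xs) + L / 2 * sqnorm (xs - L^-1 *: g xs - xs)
     = - (1 / (2 * L)) * sqnorm (g xs).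
    sumify; apply: eq_bigr => i _; rewrite !mxE; field; by rewrite ?L0.
  have sq0 : 0 <= sqnorm (g xs) by rewrite /sqnorm /dot sumr_ge0 // => i _; rewrite -expr2 sqr_ge0.
  have c0 : 0 < 1 / (2 * L) by rewrite divr_gt0 // mulr_gt0.
  move=> Hm.
  have sq00 : sqnorm (g xs) = 0.
    apply/eqP; rewrite eq_le sq0 andbT.
    have : 1 / (2 * L) * sqnorm (g xs) <= 0 by move: H Hm E; lra.
    by rewrite pmulr_rle0.
  apply/rowP => i; rewrite mxE.
  move: sq00; rewrite /sqnorm /dot => /eqP; rewrite psumr_eq0; last by move=> j _; rewrite -expr2 sqr_ge0.
  move=> /allP /(_ i (mem_index_enum _)) /implyP /(_ isT).
  by rewrite mulf_eq0 orbb => /eqP.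
have I1 := interp hmu hL hF yprev yk.
have I2 := interp hmu hL hF xs yk.
rewrite gxs in I2.
set c := mu / (2 * (1 - mu / L)) in I1 I2 *.
pose J1 := dot (g yk) (yprev - yk) + 1 / (2 * L) * sqnorm (g yprev - g yk)
   + c * sqnorm (yprev - yk - L^-1 *: (g yprev - g yk)).
pose J2 := dot (g yk) (xs - yk) + 1 / (2 * L) * sqnorm (0 - g yk)
   + c * sqnorm (xs - yk - L^-1 *: (0 - g yk)).
have {}I1 : f yk + J1 <= f yprev by move: I1; rewrite /J1; lra.
have {}I2 : f yk + J2 <= f xs by move: I2; rewrite /J2; lra.
pose l1 := (1 - q) * Ak.
pose l2 := (1 - q) * (Ak1 - Ak).
have l1p : 0 <= l1 by rewrite mulr_ge0 // ltW.
have l2p : 0 <= l2 by rewrite mulr_ge0 // ltW.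
have P1 : 0 <= l1 * (f yprev - (f yk + J1)) by rewrite mulr_ge0 // subr_ge0.
have P2 : 0 <= l2 * (fs - (f yk + J2)) by rewrite mulr_ge0 // subr_ge0 hfs.
set PB := (1 - q) * Ak1 * (- (1 / (2 * L)) * sqnorm (g yk) - c * sqnorm (yk - L^-1 *: g yk - xs))
    + (L + mu * Ak1) * sqnorm (zk1 - xs).
set PA := (1 - q) * Ak * (- (1 / (2 * L)) * sqnorm (g yprev) - c * sqnorm (yprev - L^-1 *: g yprev - xs))
    + (L + mu * Ak) * sqnorm (zk - xs).
have Q0' : 1 - mu / L * deltak ^+ 2 != 0 by rewrite -hq.
have d0 : deltak != 0 by rewrite gt_eqF.
have hL1 : L - mu != 0 by rewrite subr_eq0 gt_eqF.
have hL2 : L - mu * deltak ^+ 2 != 0.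
  have -> : L - mu * deltak ^+ 2 = L * (1 - q * deltak ^+ 2) by rewrite hq; field.
  by rewrite mulf_neq0.
have KEY : PB - PA - l1 * J1 - l2 * J2 = 0.
  rewrite /PB /PA /J1 /J2.
  sumify.
  rewrite big1 // => i _.
  rewrite hzk1; set G := g yk.
  rewrite hyk hxk hbeta !mxE.
  clearbody G; rewrite /l1 /l2 /c hB hAk hq.
  field.
  by rewrite L0 hL1 hL2 d0.
have E1 : (1 - q) * Ak1 * (f yk - fs - 1 / (2 * L) * sqnorm (g yk) - c * sqnorm (yk - L^-1 *: g yk - xs))
    + (L + mu * Ak1) * sqnorm (zk1 - xs) = (1 - q) * Ak1 * (f yk - fs) + PB by rewrite /PB; ring.
have E2 : (1 - q) * Ak * (f yprev - fs - 1 / (2 * L) * sqnorm (g yprev) - c * sqnorm (yprev - L^-1 *: g yprev - xs))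
    + (L + mu * Ak) * sqnorm (zk - xs) = (1 - q) * Ak * (f yprev - fs) + PA by rewrite /PA; ring.
rewrite E1 E2.
move: P1 P2 KEY; rewrite /l1 /l2.
clearbody J1 J2 PA PB.
lra.
Qed.

Theorem lemma1 (R : realType) (d : nat) (mu L : R)
  (f : 'rV[R]_d -> R) (g : 'rV[R]_d -> 'rV[R]_d) (xs : 'rV[R]_d)
  (yprev zk : 'rV[R]_d) (Ak : R) :
  0 <= mu -> mu < L ->
  in_FmuL mu L f g ->
  (forall x, f xs <= f x) ->
  0 <= Ak ->
  let q := mu / L in
  let fs := f xs in
  let xk := yprev - L^-1 *: g yprev in
  let Ak1 := ((1 + q) * Ak + 2 * (1 + Num.sqrt ((1 + Ak) * (1 + q * Ak))))
               / (1 - q) ^+ 2 in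
  let betak := Ak / ((1 - q) * Ak1) in
  let deltak := (1 / 2) * (((1 - q) ^+ 2 * Ak1 - (1 + q) * Ak)
                            / (1 + q + q * Ak)) in
  let yk := (1 - betak) *: zk + betak *: xk in
  let zk1 := (1 - q * deltak) *: zk + (q * deltak) *: yk
             - (deltak / L) *: g yk in
  let phi := fun (A : R) (y z : 'rV[R]_d) =>
    (1 - q) * A * (f y - fs - 1 / (2 * L) * sqnorm (g y)
                   - mu / (2 * (1 - mu / L)) * sqnorm (y - L^-1 *: g y - xs))
    + (L + mu * A) * sqnorm (z - xs) in
  phi Ak1 yk zk1 <= phi Ak yprev zk.
Proof.
move=> hmu hL hF hmin hA.
exact (@main R d mu L f g xs yprev zk Ak _ _ _ _ _ _ _ _ hmu hL hF hmin hA erefl erefl erefl erefl erefl erefl erefl erefl).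
Qed.
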